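(* Let $M\in[\mathbb N]$, $n\in\mathbb N$ and $\xi<\omega_1$. Suppose that $S_\xi^n(M)=\bigcup_{i=1}^k\mathfrak F_i$, where each $\mathfrak F_i$ is a hereditary family of finite subsets of $\mathbb N$. Then there exist $N\in[M]$ and $i_0\le k$ such that $S_\xi^n(N)\subset\mathfrak F_{i_0}$.
   Context: $[M]$ is the set of infinite subsets of $M$, enumerated increasingly $N=(n_i)$; $N(F)=\{n_i:i\in F\}$, $\mathfrak G(N)=\{N(F):F\in\mathfrak G\}$. A family is hereditary if closed under taking subsets. For finite nonempty $F_1$ and nonempty $F_2$, $F_1<F_2$ means $\max F_1<\min F_2$. For hereditary $\mathfrak G$, $\mathfrak G^n=\{\bigcup_{i=1}^nF_i:F_1<\cdots<F_n,\ F_i\in\mathfrak G\}$; $S_\xi^n(N)$ means $(S_\xi^n)(N)$. For each countable ordinal $\xi$ fix successor ordinals $(\beta_j(\xi)+1)_j$: equal to $\xi$ if $\xi$ is a successor, strictly increasing to $\xi$ if $\xi$ is a limit. Schreier families: $S_0=\{\{j\}:j\in\mathbb N\}\cup\{\emptyset\}$; $S_{\zeta+1}=\{\bigcup_{i=1}^jF_i:j\le\min F_1,\ F_1<\cdots<F_j,\ F_i\in S_\zeta\}\cup\{\emptyset\}$; for limit $\xi$, $S_\xi=\{F:F\in S_{\beta_j(\xi)+1}\text{ for some }j\le\min F\}$. *)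

(* Defs.v *)
From mathcomp Require Import all_boot.
From mathcomp Require Import boolp classical_sets cardinality.
Set Implicit Arguments. Unset Strict Implicit. Unset Printing Implicit Defensive.
Local Open Scope classical_set_scope.

(* Countable ordinals with fixed fundamental sequences, as Brouwer trees:
   OL f stands for the limit ordinal sup_j f j, where f j = beta_j(xi)+1
   (0-indexed: f j is the paper's beta_{j+1}(xi)+1). *)
Inductive ord := OZ | OS of ord | OL of (nat -> ord).

Fixpoint ole (a b : ord) {struct a} : Prop :=
  match a with
  | OZ => True
  | OS a' =>
      (fix olt_a' (b : ord) : Prop :=
         match b with
         | OZ => False
         | OS b' => ole a' b'
         | OL g => exists n, olt_a' (g n)
         end) b
  | OL f => forall n, ole (f n) b
  end.

Definition olt (a b : ord) : Prop := ole (OS a) b.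

Definition is_succ (a : ord) : Prop := exists b, a = OS b.

Fixpoint ord_wf (a : ord) : Prop :=
  match a with
  | OZ => True
  | OS b => ord_wf b
  | OL f => (forall j, is_succ (f j) /\ ord_wf (f j)) /\
            (forall j, olt (f j) (f j.+1))
  end.

Definition blocks (G : set (set nat)) (j : nat) (F : set nat) : Prop :=
  exists Fs : nat -> set nat,
    (forall i, i < j -> G (Fs i) /\ Fs i !=set0) /\
    (forall i, i.+1 < j -> forall x y, Fs i x -> Fs i.+1 y -> x < y) /\
    F = \bigcup_(i in [set i | i < j]) Fs i.

(* Schreier families; the natural numbers are {1,2,...}. *)
Fixpoint schreier (a : ord) : set (set nat) :=
  match a with
  | OZ => [set F | F = set0 \/ exists j, 1 <= j /\ F = [set j]]
  | OS b => [set F | F = set0 \/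
               exists j, 1 <= j /\ (forall x, F x -> j <= x) /\
                         blocks (schreier b) j F]
  | OL f => [set F | exists j, (forall x, F x -> j < x) /\ schreier (f j) F]
  end.

(* G^n: unions of (at most) n successive members of G; empty members
   are allowed (G hereditary contains the empty set), i.e. the nonempty
   ones are successive. *)
Definition fpow (G : set (set nat)) (n : nat) : set (set nat) :=
  [set F | exists j, j <= n /\ blocks G j F].

(* An infinite subset of N = {1,2,...} given by its increasing enumeration
   n_1 < n_2 < ...  (0-indexed: M 0 = n_1). *)
Definition inf_subset (M : nat -> nat) : Prop :=
  0 < M 0 /\ forall i, M i < M i.+1.

Definition subinf (N M : nat -> nat) : Prop :=
  inf_subset N /\ forall i, exists k, N i = M k.

(* G(N) = { N(F) : F in G }, N(F) = { n_i : i in F } with n_i = N (i-1). *)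
Definition fam_img (N : nat -> nat) (G : set (set nat)) : set (set nat) :=
  [set (fun i => N i.-1) @` F | F in G].

Definition hereditary (G : set (set nat)) : Prop :=
  forall A B, G A -> B `<=` A -> G B.

(* Main.v *)
Require Import Defs.
From mathcomp Require Import all_boot.
From mathcomp Require Import boolp classical_sets cardinality.
From mathcomp Require Import zify.
Local Open Scope classical_set_scope.

Definition deriv (G : set (set nat)) (a : nat) : set (set nat) :=
  [set F | (forall x, F x -> a < x) /\ G (a |` F)].

Inductive wfam : set (set nat) -> Prop :=
  WfamI G : (forall a, (exists F, deriv G a F) -> wfam (deriv G a)) -> wfam G.

Lemma wfam0 : wfam set0.
Proof. by constructor => a [F [_ []]]. Qed.

Lemma wfam_sub G H : wfam H -> G `<=` H -> wfam G.
Proof.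
move=> wH; elim: wH G => {}H _ IH G GH; constructor => a [F dF].
apply: (IH a); first by exists F; case: dF => h1 h2; split => //; exact: GH.
by move=> F' [h1 h2]; split => //; exact: GH.
Qed.

Lemma wfam_deriv G a : wfam G -> wfam (deriv G a).
Proof.
move=> wG; have [ex|nex] := pselect (exists F, deriv G a F).
  by case: wG ex => {}G IH; exact: IH.
apply: (wfam_sub _ _ wfam0) => F dF; apply: nex; by exists F.
Qed.

Lemma wfamU G H : wfam G -> wfam H -> wfam (G `|` H).
Proof.
move=> wG; elim: wG H => {}G _ IH H wH; constructor => a _.
have sub : deriv (G `|` H) a `<=` deriv G a `|` deriv H a.
  by move=> F [h1 [h2|h2]]; [left|right].
apply: (wfam_sub _ _ _ sub).
have [ex|nex] := pselect (exists F, deriv G a F).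
  by apply: (IH a ex); apply: (wfam_deriv H a).
apply: (wfam_sub _ _ (wfam_deriv H a wH)) => F [dF|//]; exfalso; apply: nex; by exists F.
Qed.

Definition fcat (G H : set (set nat)) : set (set nat) :=
  [set F | exists A B, [/\ G A, H B, (forall x y, A x -> B y -> x < y) & F = A `|` B]].

Lemma deriv_fcat G H a :
  deriv (fcat G H) a `<=` fcat (deriv G a) H `|` deriv H a.
Proof.
move=> F [Fa [A [B [GA HB AB eq]]]].
have inF y : (A `|` B) y -> y <> a -> F y.
  by rewrite -eq => -[->|].
have [Aa|nAa] := pselect (A a).
  left; exists [set y | A y /\ y <> a], B; split => //.
  - split; first by move=> y [Ay ya]; apply: Fa; apply: inF => //; left.
    have -> : a |` [set y | A y /\ y <> a] = A; last by [].
    rewrite predeqE => y; split; first by case=> [->|[]].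
    by move=> Ay; have [->|ya] := pselect (y = a); [left|right].
  - by move=> x y [Ax _] By; exact: AB.
  - rewrite predeqE => y; split.
      move=> Fy; have : (a |` F) y by right.
      rewrite eq => -[Ay|By]; [left; split => // ya|by right].
      by move: (Fa _ Fy); rewrite ya ltnn.
    case=> [[Ay ya]|By]; first by apply: inF => //; left.
    apply: inF; first by right.
    by move=> ya; move: (AB _ _ Aa By); rewrite ya ltnn.
right; split => //.
have A0 : forall y, ~ A y.
  move=> y Ay; have ya : y <> a by move=> ya; apply: nAa; rewrite -ya.
  have := Fa _ (inF _ (or_introl Ay) ya).
  have : (A `|` B) a by rewrite -eq; left.
  case=> // Ba; have := AB _ _ Ay Ba => h1 h2.
  by move: (ltn_trans h1 h2); rewrite ltnn.
have -> : a |` F = B; last by [].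
rewrite eq predeqE => y; split; [by case=> // /A0|by right].
Qed.

Lemma wfam_fcat G H : wfam G -> wfam H -> wfam (fcat G H).
Proof.
move=> wG wH; elim: wG => {}G _ IH; constructor => a _.
apply: (wfam_sub _ _ _ (deriv_fcat G H a)); apply: wfamU; last exact: wfam_deriv.
have [ex|nex] := pselect (exists F, deriv G a F); first exact: IH.
apply: (wfam_sub _ _ wfam0) => F [A [B [dA _ _ _]]]; apply: nex; by exists A.
Qed.


Fixpoint catpow (G : set (set nat)) (j : nat) : set (set nat) :=
  match j with 0 => [set F | F = set0] | j'.+1 => fcat (catpow G j') G end.

Lemma wfam_set0 : wfam [set F : set nat | F = set0].
Proof.
constructor => a [F [_ h]].
have ha : (a |` F) a by left.
by rewrite h in ha.
Qed.

Lemma wfam_catpow G j : wfam G -> wfam (catpow G j).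
Proof. move=> wG; elim: j => [|j IH] /=; [exact: wfam_set0|exact: wfam_fcat]. Qed.

Lemma catpow_mono G j j' : G set0 -> j <= j' -> catpow G j `<=` catpow G j'.
Proof.
move=> G0; elim: j' => [|j' IH]; first by rewrite leqn0 => /eqP ->.
rewrite leq_eqVlt => /orP [/eqP ->//|]; rewrite ltnS => /IH h F /h cF /=.
by exists F, set0; split => //; rewrite setU0.
Qed.

Lemma blocks_trans (Fs : nat -> set nat) J :
  (forall i, i < J -> Fs i !=set0) ->
  (forall i, i.+1 < J -> forall x y, Fs i x -> Fs i.+1 y -> x < y) ->
  forall i d, i + d.+1 < J -> forall x y, Fs i x -> Fs (i + d.+1) y -> x < y.
Proof.
move=> ne succ i d; elim: d => [|d IH] lt x y Fx Fy.
  by apply: (succ i) => //; rewrite addn1 in lt Fy.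
have lt' : i + d.+1 < J by lia.
have [z Fz] := ne _ lt'.
apply: (ltn_trans (IH lt' x z Fx Fz)); apply: (succ (i + d.+1)).
  lia.
exact: Fz. by rewrite -addnS.
Qed.

Lemma blocks_catpow G j F : blocks G j F -> catpow G j F.
Proof.
elim: j F => [|j IH] F [Fs [ne [succ eq]]] /=.
  rewrite eq; apply/seteqP; split => x // [i /= ]; by rewrite ltn0.
exists (\bigcup_(i in [set i | i < j]) Fs i), (Fs j); split.
- apply: IH; exists Fs; split; last split => //.
    by move=> i lt; apply: ne; lia.
  by move=> i lt; apply: succ; lia.
- by have [] := ne j (ltnSn j).
- move=> x y [i /= ij Fx] Fy.
  have := @blocks_trans Fs j.+1 (fun i h => proj2 (ne i h)) succ i (j - i).-1.
  have -> : i + (j - i).-1.+1 = j by lia.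
  by move=> /(_ _ x y Fx Fy); apply; lia.
- rewrite eq; apply/seteqP; split => x.
    move=> [i /=]; rewrite ltnS leq_eqVlt => /orP [/eqP ->|lt] Fx; first by right.
    by left; exists i.
  case=> [[i /= lt Fx]|Fx].
    by exists i => //=; lia.
  by exists j => //=; lia.
Qed.

Lemma schreier0 b : schreier b set0.
Proof. elim: b => [|b IH|f IH] /=; [by left|by left|by exists 0]. Qed.

Fixpoint unionf (f : nat -> ord) (m : nat) : set (set nat) :=
  match m with 0 => set0 | m'.+1 => unionf f m' `|` schreier (f m') end.

Lemma unionf_in f j m : j < m -> schreier (f j) `<=` unionf f m.
Proof.
elim: m => [|m IH] //; rewrite ltnS leq_eqVlt => /orP [/eqP ->|lt] F h /=.
  by right. by left; apply: IH.
Qed.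

Lemma wfam_schreier b : wfam (schreier b).
Proof.
elim: b => [|b IH|f IH].
- constructor => a _; apply: (wfam_sub _ _ wfam_set0) => F [Fa [h|[j [_ h]]]].
    have ha : (a |` F) a by left.
    by rewrite h in ha.
  apply/seteqP; split => x // Fx; exfalso.
  have : (a |` F) x by right.
  have : (a |` F) a by left.
  rewrite h => /= ha hx; move: (Fa x Fx); by rewrite ha hx ltnn.
- constructor => a _.
  apply: (wfam_sub _ _ (wfam_deriv _ a (wfam_catpow _ a IH))).
  move=> F [Fa [h|[j [j1 [jle bl]]]]].
    have ha : (a |` F) a by left.
    by rewrite h in ha.
  split => //; apply: (catpow_mono _ j); first exact: schreier0.
    by apply: jle; left.
  exact: blocks_catpow.
- have wU m : wfam (unionf f m).
    elim: m => [|m IHm] /=; [exact: wfam0|exact: wfamU].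
  constructor => a _; apply: (wfam_sub _ _ (wfam_deriv _ a (wU a))).
  move=> F [Fa [j [jlt h]]]; split => //; apply: (unionf_in f j) => //.
  by apply: jlt; left.
Qed.

Lemma wfam_fpow b n : wfam (fpow (schreier b) n).
Proof.
apply: (wfam_sub _ _ (wfam_catpow _ n (wfam_schreier b))).
move=> F [j [jn bl]]; apply: (catpow_mono _ j) => //; first exact: schreier0.
exact: blocks_catpow.
Qed.


Lemma blocks_img (G : set (set nat)) j F (h : nat -> nat) :
  (forall x y, x < y -> h x < h y) -> (forall A, G A -> G (h @` A)) ->
  blocks G j F -> blocks G j (h @` F).
Proof.
move=> hs hG [Fs [ne [succ eq]]]; exists (fun i => h @` Fs i); split; last split.
- move=> i lt; have [Gi [z Fz]] := ne i lt; split; first exact: hG.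
  by exists (h z); exists z.
- by move=> i lt _ _ [x Fx <-] [y Fy <-]; apply: hs; exact: (succ i lt).
- by rewrite eq image_bigcup.
Qed.

Lemma schreier_img b (h : nat -> nat) :
  (forall x y, x < y -> h x < h y) -> (forall x, x <= h x) ->
  forall F, schreier b F -> schreier b (h @` F).
Proof.
move=> hs hx; elim: b => [|b IH|f IH] F /=.
- case=> [->|[j [j1 ->]]]; first by left; rewrite image_set0.
  right; exists (h j); split; last by rewrite image_set1.
  exact: leq_trans j1 (hx j).
- case=> [->|[j [j1 [jle bl]]]]; first by left; rewrite image_set0.
  right; exists j; split => //; split.
    by move=> _ [x Fx <-]; exact: leq_trans (jle x Fx) (hx x).
  exact: blocks_img.
- move=> [j [jlt h1]]; exists j; split; last exact: IH.
  by move=> _ [x Fx <-]; exact: leq_trans (jlt x Fx) (hx x).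
Qed.

Lemma fpow_img b n (h : nat -> nat) :
  (forall x y, x < y -> h x < h y) -> (forall x, x <= h x) ->
  forall F, fpow (schreier b) n F -> fpow (schreier b) n (h @` F).
Proof.
move=> hs hx F [j [jn bl]]; exists j; split => //.
apply: blocks_img => //; exact: schreier_img.
Qed.

Lemma schreier_pos b F x : schreier b F -> F x -> 0 < x.
Proof.
elim: b F => [|b IH|f IH] F /=.
- by case=> [->//|[j [j1 ->]]] /= ->.
- case=> [->//|[j [j1 [jle _]]]] Fx; exact: leq_trans j1 (jle x Fx).
- by move=> [j [jlt _]] Fx; exact: leq_ltn_trans (leq0n j) (jlt x Fx).
Qed.

Lemma fpow_pos b n F x : fpow (schreier b) n F -> F x -> 0 < x.
Proof.
move=> [j [_ [Fs [ne [_ ->]]]]] [i /= lt Fx].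
exact: (schreier_pos b (Fs i) x (proj1 (ne i lt))).
Qed.

Lemma fpow0 G n : fpow G n set0.
Proof.
exists 0; split => //; exists (fun _ => set0); split => //; split => //.
by apply/seteqP; split => x // [i /=]; rewrite ltn0.
Qed.


Definition eps {T : Type} (d : T) (P : T -> Prop) : T :=
  match pselect (exists x, P x) with
  | left h => proj1_sig (cid h) | right _ => d end.

Lemma epsP {T : Type} (d : T) (P : T -> Prop) : (exists x, P x) -> P (eps d P).
Proof. rewrite /eps; case: pselect => // h _; exact: (proj2_sig (cid h)). Qed.

Lemma pigeon k (c : nat -> nat) m0 : (forall j, m0 <= j -> c j < k) ->
  exists i, i < k /\ forall m, exists j, m <= j /\ c j = i.
Proof.
elim: k m0 => [|k IH] m0 h; first by have := h m0 (leqnn _).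
have [inf|fin] := pselect (forall m, exists j, m <= j /\ c j = k).
  by exists k; split.
have [m1 hm1] : exists m1, forall j, m1 <= j -> c j <> k.
  apply: contrapT => nex; apply: fin => m.
  apply: contrapT => nj; apply: nex; exists m => j mj cj; apply: nj; by exists j.
have h' : forall j, maxn m0 m1 <= j -> c j < k.
  move=> j; rewrite geq_max => /andP [j0 j1].
  have := h j j0; have := hm1 j j1; lia.
have [i [ik hi]] := IH (maxn m0 m1) h'.
by exists i; split => //; lia.
Qed.

Lemma exists_min (A : set nat) : (exists x, A x) ->
  exists x, A x /\ forall y, A y -> x <= y.
Proof.
move=> [x0 Ax0]; apply: contrapT => nmin.
suff : forall n y, y <= n -> ~ A y by move/(_ x0 x0 (leqnn _)).
elim => [|n IH] y yn Ay.
  apply: nmin; exists y; split => // z _; move: yn; lia.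
apply: nmin; exists y; split => // z Az; apply: contrapT => zy.
have : z <= n by lia.
by move=> /IH /(_ Az).
Qed.

Definition infp (L : set nat) := forall m, exists x, m < x /\ L x.

Lemma Qlem G : wfam G -> forall k (Fs : nat -> set (set nat)) (L : set nat),
  0 < k -> infp L -> (forall i, i < k -> hereditary (Fs i)) ->
  (forall A, G A -> A `<=` L -> exists i, i < k /\ Fs i A) ->
  exists L', [/\ L' `<=` L, infp L' &
    exists i, i < k /\ forall A, G A -> A `<=` L' -> Fs i A].
Proof.
move=> wG; elim: wG => {}G _ IH k Fs L k0 infL her cov.
pose spec (Lc : set nat) (t : nat * set nat * nat) : Prop :=
  [/\ Lc t.1.1, t.1.2 `<=` Lc, (forall x, t.1.2 x -> t.1.1 < x) & infp t.1.2] /\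
  [/\ t.2 < k, (forall F, deriv G t.1.1 F -> F `<=` t.1.2 -> Fs t.2 (t.1.1 |` F))
    & (G set0 -> Fs t.2 set0)].
have c0 : exists c, c < k /\ (G set0 -> Fs c set0).
  have [G0|nG0] := pselect (G set0).
    have [i [ik hi]] := cov set0 G0 (sub0set _).
    by exists i; split.
  by exists 0; split.
have [ci [cik ci0]] := c0.
have ex : forall Lc, infp Lc -> Lc `<=` L -> exists t, spec Lc t.
  move=> Lc iL sL; have [a [_ La]] := iL 0.
  pose L1 := [set x | Lc x /\ a < x].
  have iL1 : infp L1.
    move=> m; have [x [mx Lx]] := iL (maxn m a); exists x; split; first lia.
    by split => //; lia.
  have [g|ng] := pselect (exists F, deriv G a F); last first.
    exists (a, L1, ci); (split; split) => //=.
    - by move=> x [].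
    - by move=> x [].
    - by move=> F dF; exfalso; apply: ng; exists F.
  have her' : forall i, i < k -> hereditary [set F | Fs i (a |` F)].
    move=> i ik A B hA BA; apply: (her i ik (a |` A)) => //.
    by move=> x [->|/BA]; [left|right].
  have cov' : forall A, deriv G a A -> A `<=` L1 ->
      exists i, i < k /\ [set F | Fs i (a |` F)] A.
    move=> A [_ GA] AL; apply: cov => // x [->|/AL [Lx _]]; exact: sL.
  have [L' [sL' iL' [c [ck hc]]]] := IH a g k _ L1 k0 iL1 her' cov'.
  have [Fc0|nFc0] := pselect (Fs c set0).
    exists (a, L', c); (split; split) => //=.
    - by move=> x /sL' [].
    - by move=> x /sL' [].
  exists (a, L', ci); (split; split) => //=.
  - by move=> x /sL' [].
  - by move=> x /sL' [].
  - move=> F dF FL; exfalso; apply: nFc0.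
    by apply: (her c ck _ _ (hc F dF FL)) => x.
pose stepf (Lc : set nat) := eps (0, setT, 0) (spec Lc).
pose seqf := fix seqf (j : nat) : set nat := match j with 0 => L | j'.+1 => (stepf (seqf j')).1.2 end.
have inv : forall j, infp (seqf j) /\ seqf j `<=` L.
  elim => [|j [IHi IHs]] /=; first by split.
  have [[_ s _ i] _] := epsP (0, setT, 0) (spec (seqf j)) (ex _ IHi IHs).
  split => //; move=> x /s; exact: IHs.
have sp : forall j, spec (seqf j) (stepf (seqf j)).
  move=> j; have [i s] := inv j; exact: (epsP _ _ (ex _ i s)).
pose a j := (stepf (seqf j)).1.1.
pose c j := (stepf (seqf j)).2.
have dec : forall j d, seqf (j + d) `<=` seqf j.
  move=> j; elim => [|d IHd]; first by rewrite addn0.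
  move=> x; rewrite addnS /= => h; apply: IHd.
  by have [[_ s _ _] _] := sp (j + d); exact: s.
have a_in : forall j, seqf j (a j) by move=> j; have [[h _ _ _] _] := sp j.
have a_lt : forall j j', j < j' -> a j < a j'.
  move=> j j' jj'; have [[_ _ h _] _] := sp j; apply: h.
  have -> : j' = j.+1 + (j' - j.+1) by lia.
  exact: (dec j.+1 (j' - j.+1) _ (a_in _)).
have a_ge : forall j, j <= a j.
  elim => [|j IHj] //; exact: leq_ltn_trans IHj (a_lt _ _ (ltnSn _)).
have [i [ik hi]] := pigeon k c 0 (fun j _ => match sp j with conj _ (And3 h _ _) => h end).
exists [set x | exists j, x = a j /\ c j = i]; split.
- move=> _ [j [-> _]]; exact: (proj2 (inv j)).
- move=> m; have [j [mj cj]] := hi m.+1; exists (a j); split.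
    exact: leq_trans mj (a_ge j).
  by exists j.
exists i; split => // A GA AL.
have [[x Ax]|nA] := pselect (exists x, A x); last first.
  have A0 : A = set0 by apply/seteqP; split => x // Ax; apply: nA; exists x.
  rewrite A0 in GA *; have [j [_ cj]] := hi 0.
  have [_ [_ _ h]] := sp j; rewrite -cj; exact: h.
have [y [Ay ymin]] := exists_min A (ex_intro _ x Ax).
have [j [yj cj]] := AL y Ay.
pose F := [set z | A z /\ y < z].
have AF : A = a j |` F.
  rewrite -yj; apply/seteqP; split => z.
    move=> Az; have [->|zy] := pselect (z = y); first by left.
    right; split => //; have := ymin z Az; move: zy; lia.
  by case=> [->|[]].
have [_ [_ h _]] := sp j.
rewrite -cj AF; apply: h.
  change (deriv G (a j) F).
  by split => [z [_ yz]|]; [rewrite -yj|rewrite -AF].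
change (F `<=` seqf j.+1).
move=> z [Az yz]; have [j' [zj _]] := AL z Az.
have jj' : j < j'.
  rewrite ltnNge; apply/negP => jj'.
  move: jj'; rewrite leq_eqVlt => /orP [/eqP ej|lt].
    by move: yz; rewrite zj yj ej ltnn.
  by move: (a_lt _ _ lt) yz; rewrite zj yj; lia.
have -> : z = a j' by [].
have := dec j.+1 (j' - j.+1) (a j').
have -> : j.+1 + (j' - j.+1) = j' by lia.
by move=> /(_ (a_in j')).
Qed.


Theorem lemma2p14 (M : nat -> nat) (n : nat) (xi : ord)
  (k : nat) (Fam : nat -> set (set nat)) :
  inf_subset M -> 1 <= n -> ord_wf xi ->
  (forall i, i < k -> hereditary (Fam i) /\
                      (forall A, Fam i A -> finite_set A)) ->
  fam_img M (fpow (schreier xi) n) = [set A | exists2 i, i < k & Fam i A] ->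
  exists N, subinf N M /\
    exists2 i0, i0 < k & fam_img N (fpow (schreier xi) n) `<=` Fam i0.
Proof.
move=> [M0 Mlt] _ _ hFam Hcov.
pose imgM (F : set nat) := (fun i => M i.-1) @` F.
have inG : forall F, fpow (schreier xi) n F -> exists2 i, i < k & Fam i (imgM F).
  move=> F GF; have : fam_img M (fpow (schreier xi) n) (imgM F) by exists F.
  by rewrite Hcov.
have k0 : 0 < k.
  by have [i ik _] := inG set0 (fpow0 _ n); lia.
have infT : infp setT by move=> m; exists m.+1.
have her : forall i, i < k -> hereditary [set F | Fam i (imgM F)].
  move=> i ik A B hA BA; apply: (proj1 (hFam i ik) _ _ hA).
  by move=> _ [x Bx <-]; exists x => //; exact: BA.
have cov : forall A, fpow (schreier xi) n A -> A `<=` setT ->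
    exists i, i < k /\ [set F | Fam i (imgM F)] A.
  by move=> A GA _; have [i ik h] := inG A GA; exists i.
have [L' [_ iL' [i [ik hi]]]] := Qlem _ (wfam_fpow xi n) k _ setT k0 infT her cov.
pose nxt m := eps 0 (fun x => m < x /\ L' x).
have nxtP : forall m, m < nxt m /\ L' (nxt m) by move=> m; exact: epsP _ _ (iL' m).
pose e := fix e (t : nat) : nat := match t with 0 => nxt 0 | t'.+1 => nxt (e t') end.
have e_lt : forall t, e t < e t.+1 by move=> t; exact: (proj1 (nxtP (e t))).
have e_in : forall t, L' (e t) by case => [|t]; exact: (proj2 (nxtP _)).
have e_pos : forall t, 0 < e t.
  by case => [|t]; [exact: (proj1 (nxtP 0))|exact: leq_ltn_trans (leq0n _) (e_lt t)].
have e_mono : forall x y, x < y -> e x < e y.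
  move=> x; elim => [//|y IHy]; rewrite ltnS leq_eqVlt => /orP [/eqP ->//|/IHy h].
  exact: ltn_trans h (e_lt y).
have e_ge : forall t, t < e t.
  elim => [|t IHt]; [exact: e_pos|exact: leq_ltn_trans IHt (e_lt t)].
have Mmono : forall x y, x < y -> M x < M y.
  move=> x; elim => [//|y IHy]; rewrite ltnS leq_eqVlt => /orP [/eqP ->//|/IHy h].
  exact: ltn_trans h (Mlt y).
have Mpos : forall x, 0 < M x.
  by case => [//|x]; exact: leq_ltn_trans (leq0n _) (Mmono _ _ (ltn0Sn x)).
pose N t := M (e t).-1.
exists N; split.
  split; first split.
  - exact: Mpos.
  - move=> t; apply: Mmono; have := e_lt t; have := e_pos t; lia.
  - by move=> t; exists (e t).-1.
exists i => // _ [F GF <-].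
pose E x := if x is x'.+1 then e x' else 0.
have Es : forall x y, x < y -> E x < E y.
  case => [|x] [|y] // xy; first exact: (e_pos y).
  exact: (e_mono x y xy).
have Ege : forall x, x <= E x by case => [|x] //; exact: (e_ge x).
have -> : (fun i => N i.-1) @` F = imgM (E @` F).
  apply/seteqP; split.
    move=> _ [x Fx <-]; exists (E x); first by exists x.
    have := fpow_pos xi n F x GF Fx; by case: x Fx.
  move=> _ [_ [x Fx <-] <-]; exists x => //.
  have := fpow_pos xi n F x GF Fx; by case: x Fx.
apply: hi; first exact: fpow_img.
move=> _ [x Fx <-]; have := fpow_pos xi n F x GF Fx; case: x Fx => //= x _ _.
Qed.
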